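(* Let $\mu>1$ be a Salem number of degree four, $K=\mathbb{Q}(\mu+\mu^{-1})$, and let $\tau$ be an embedding of $\mathbb{Q}(\mu)$ into $\mathbb{C}$ whose restriction to $K$ is the nontrivial embedding of $K$ (so $\tau(\mu)=e^{i\nu}$ for some $\nu\in(0,\pi)$, choosing $\tau$ appropriately). Suppose there is $D\in\mathcal{O}_K$ with $\mathbb{Q}(\mu)=K(\sqrt D)$ and $\mu=t+u\sqrt D$ with $t,u\in\mathcal{O}_K$. Then there exists $m\in\{0,1,2\}$ such that $\mu^{m+1}=t_m+u_m\sqrt D$ with $t_m,u_m\in\mathcal{O}_K$ and $\tau(t_m)^2>\tfrac12$.
   Context: A Salem number is a real algebraic integer $\lambda>1$ such that $\lambda^{-1}$ is a Galois conjugate of $\lambda$ and all other conjugates of $\lambda$ lie on the unit circle. $\mathcal{O}_K$ is the ring of integers of $K$. *)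

(* Defs.v *)
From HB Require Import structures.
From mathcomp Require Import all_boot all_order all_algebra all_field.
Set Implicit Arguments. Unset Strict Implicit. Unset Printing Implicit Defensive.
Import Order.TTheory GRing.Theory Num.Theory.
Local Open Scope ring_scope.

Definition is_subfield (F : algC -> Prop) : Prop :=
  F 0 /\ F 1 /\
  (forall x y, F x -> F y -> F (x + y)) /\
  (forall x, F x -> F (- x)) /\
  (forall x y, F x -> F y -> F (x * y)) /\
  (forall x, F x -> F x^-1).

Definition gen_field (S : algC -> Prop) : algC -> Prop :=
  fun z => forall F, is_subfield F -> (forall x, S x -> F x) -> F z.

Definition Qadj (a : algC) : algC -> Prop := gen_field (fun x => x = a).

Definition Fadj (K : algC -> Prop) (b : algC) : algC -> Prop :=
  gen_field (fun x => K x \/ x = b).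

Definition ring_of_integers (K : algC -> Prop) : algC -> Prop :=
  fun z => K z /\ z \in Aint.

Definition salem_of_degree (mu : algC) (d : nat) : Prop :=
  [/\ mu \in Aint, mu \is Num.real, 1 < mu &
   exists p : {poly rat},
     p \is monic /\ irreducible_poly p /\ size p = d.+1 /\
     root (map_poly ratr p) mu /\ root (map_poly ratr p) mu^-1 /\
     (forall z, root (map_poly ratr p) z -> z != mu -> z != mu^-1 -> `|z| = 1)].

(* Main.v *)
Require Import Defs.
From HB Require Import structures.
From mathcomp Require Import all_boot all_order all_algebra all_field.
From mathcomp Require Import ring zify.
Import Order.TTheory GRing.Theory Num.Theory.
Local Open Scope ring_scope.

Lemma ineq (R : numFieldType) (x : R) : x <= 1/2 -> x != 1/2 -> (2*x-1)^+2 <= 1/2 -> x*(4*x-3)^+2 <= 1/2 -> False.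
Proof.
move=> h0 h1 h2 h3.
have two0 : (2:R) != 0 by rewrite pnatr_eq0.
pose y := 1/2 - x.
have ex : x = 1/2 - y by rewrite /y opprB addrC subrK.
have y0 : 0 < y by rewrite lt0r subr_eq0 eq_sym h1 subr_ge0 h0.
move: h2 h3; rewrite ex.
have -> : (2 * (1 / 2 - y) - 1)^+2 = 4 * y^+2 by field.
have -> : (1 / 2 - y) * (4 * (1 / 2 - y) - 3) ^+ 2 = 1/2 + (3*y - 16*y^+3) by field.
rewrite gerDl subr_le0 => h2 h3.
have h4 : 3 <= 16 * y^+2.
  by rewrite -(ler_pM2r y0) -mulrA -exprSr.
have : 16 * y^+2 <= 2.
  have -> : 16 * y^+2 = 4 * (4 * y^+2) by ring.
  have -> : (2:R) = 4 * (1/2) by field.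
  by rewrite ler_pM2l // ltr0n.
move=> /(le_trans h4); rewrite ler_nat.
done.
Qed.

Lemma no_half (m : int) : (1 : int) = 2 * m -> False.
Proof. lia. Qed.

Lemma gen_sub S : is_subfield (gen_field S).
Proof.
rewrite /gen_field; split; [|split;[|split;[|split;[|split]]]].
- by move=> F [].
- by move=> F [_ []].
- move=> x y Hx Hy F HF HS; case: (HF) => _ [_ [Hadd _]]; exact: Hadd (Hx F HF HS) (Hy F HF HS).
- move=> x Hx F HF HS; case: (HF) => _ [_ [_ [Hopp _]]]; exact: Hopp (Hx F HF HS).
- move=> x y Hx Hy F HF HS; case: (HF) => _ [_ [_ [_ [Hmul _]]]]; exact: Hmul (Hx F HF HS) (Hy F HF HS).
- move=> x Hx F HF HS; case: (HF) => _ [_ [_ [_ [_ Hinv]]]]; exact: Hinv (Hx F HF HS).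
Qed.

Lemma gen_in {S x} : S x -> gen_field S x.
Proof. by move=> Sx F _ HS; apply: HS. Qed.

Lemma gen_min {S F} : is_subfield F -> (forall x, S x -> F x) -> forall z, gen_field S z -> F z.
Proof. by move=> HF HS z Hz; apply: Hz. Qed.

Lemma sfD {F x y} : is_subfield F -> F x -> F y -> F (x + y).
Proof. by case=> _ [_ [H _]]; apply: H. Qed.
Lemma sfN {F x} : is_subfield F -> F x -> F (- x).
Proof. by case=> _ [_ [_ [H _]]]; apply: H. Qed.
Lemma sfM {F x y} : is_subfield F -> F x -> F y -> F (x * y).
Proof. by case=> _ [_ [_ [_ [H _]]]]; apply: H. Qed.
Lemma sfV {F x} : is_subfield F -> F x -> F (x^-1).
Proof. by case=> _ [_ [_ [_ [_ H]]]]; apply: H. Qed.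
Lemma sf1 {F} : is_subfield F -> F 1.
Proof. by case=> _ []. Qed.

Lemma fix_sf (tau : {rmorphism algC -> algC}) : is_subfield (fun x => tau x = x).
Proof.
split; [|split;[|split;[|split;[|split]]]].
- exact: rmorph0.
- exact: rmorph1.
- by move=> x y hx hy; rewrite rmorphD hx hy.
- by move=> x hx; rewrite rmorphN hx.
- by move=> x y hx hy; rewrite rmorphM hx hy.
- by move=> x hx; rewrite fmorphV hx.
Qed.

Lemma real_sf (tau : {rmorphism algC -> algC}) :
  is_subfield (fun x => x \is Num.real /\ tau x \is Num.real).
Proof.
split; [|split;[|split;[|split;[|split]]]].
- by rewrite rmorph0 real0.
- by rewrite rmorph1 real1.
- by move=> x y [h1 h2] [h3 h4]; rewrite rmorphD !realD.
- by move=> x [h1 h2]; rewrite rmorphN !realN.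
- by move=> x y [h1 h2] [h3 h4]; rewrite rmorphM !realM.
- by move=> x [h1 h2]; rewrite fmorphV !realV.
Qed.

Ltac realize := repeat first [ assumption | exact: real1 | exact: real0 | exact: realn | apply: realB | apply: realD | apply: realM | apply: realX | rewrite realV | rewrite realN ].

Theorem proposition5p4 (mu : algC) (tau : {rmorphism algC -> algC})
    (D s t u : algC) :
  salem_of_degree mu 4 ->
  (exists x, Qadj (mu + mu^-1) x /\ tau x != x) ->
  ring_of_integers (Qadj (mu + mu^-1)) D ->
  s ^+ 2 = D ->
  (forall z, Qadj mu z <-> Fadj (Qadj (mu + mu^-1)) s z) ->
  ring_of_integers (Qadj (mu + mu^-1)) t ->
  ring_of_integers (Qadj (mu + mu^-1)) u ->
  mu = t + u * s ->
  exists m : nat, (m <= 2)%N /\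
    exists tm um : algC,
      [/\ ring_of_integers (Qadj (mu + mu^-1)) tm,
          ring_of_integers (Qadj (mu + mu^-1)) um,
          mu ^+ m.+1 = tm + um * s &
          1 / 2 < (tau tm) ^+ 2].
Proof.
move=> [muA muR mu1 [p [pmon [pirr [psz [pmu [pmui pother]]]]]]] [x0 [Kx0 tx0]]
  [KD AD] sD Hfield [Kt At] [Ku Au] mueq.
have KS : is_subfield (Qadj (mu + mu^-1)) := gen_sub _.
have Ka : Qadj (mu + mu^-1) (mu + mu^-1) by apply: gen_in.
have mu0 : mu != 0 by apply: contraTneq mu1 => ->; rewrite ltr10.
have ta : tau (mu + mu^-1) != mu + mu^-1.
  apply: contra tx0 => /eqP h; apply/eqP.
  have := @gen_min _ _ (fix_sf tau) _ _ Kx0. by apply => x ->.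
have zroot : root (map_poly ratr p) (tau mu).
  have <- : map_poly tau (map_poly ratr p) = map_poly ratr p.
    by rewrite -map_poly_comp; apply: eq_map_poly => r /=; rewrite fmorph_rat.
  by rewrite /root horner_map (rootP pmu) rmorph0.
have zmu : tau mu != mu by apply: contra ta => /eqP h; rewrite rmorphD fmorphV h.
have zmui : tau mu != mu^-1.
  by apply: contra ta => /eqP h; rewrite rmorphD fmorphV h invrK addrC.
have nz : `|tau mu| = 1 := pother _ zroot zmu zmui.
have treal : tau (mu + mu^-1) \is Num.real.
  rewrite rmorphD fmorphV invC_norm nz expr1n invr1 mul1r.
  have -> : tau mu + (tau mu)^* = 'Re (tau mu) * 2 by rewrite ReE divfK // pnatr_eq0.
  by rewrite realM // ?Creal_Re // realn.
have SK : forall x, Qadj (mu + mu^-1) x -> x \is Num.real /\ tau x \is Num.real.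
  move=> x; apply: (gen_min (real_sf tau)) => {}x ->; split => //.
  by rewrite realD // realV.
have muK : ~ Qadj (mu + mu^-1) mu.
  move=> /SK [_ zr].
  have z2 : tau mu ^+ 2 = 1 by rewrite -(real_normK zr) nz expr1n.
  have : exists r : rat, root p r.
    have : (tau mu - 1) * (tau mu + 1) == 0 by rewrite -subr_sqr z2 expr1n subrr.
    rewrite mulf_eq0 subr_eq0 addr_eq0 => /orP [] /eqP hz.
    - by exists 1; rewrite -(fmorph_root (ratr : {rmorphism rat -> algC})) rmorph1 -hz.
    - by exists (-1); rewrite -(fmorph_root (ratr : {rmorphism rat -> algC})) rmorphN1 -hz.
  move=> [r hr].
  have hd : ('X - r%:P) %| p by rewrite dvdp_XsubCl.
  have := apply_irredp pirr; move=> /(_ _ _ hd).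
  by rewrite size_XsubC => /(_ isT) /eqp_size; rewrite size_XsubC psz.
have sK : ~ Qadj (mu + mu^-1) s.
  move=> Ks; apply: muK.
  have : Fadj (Qadj (mu + mu^-1)) s mu by apply/Hfield; apply: gen_in.
  by apply: (gen_min KS) => x [// | ->].
have u0 : u != 0.
  apply/negP => /eqP u0; apply: muK.
  have e : t = mu by rewrite mueq u0 mul0r addr0.
  by move: Kt; rewrite e.
set a := mu + mu^-1 in Ka KS SK muK sK Kt Ku KD.
have Ha : mu^+2 - a*mu + 1 = 0 by rewrite /a; field.
set X := t^+2 + u^+2*D - a*t + 1.
set Y := (2*t - a)*u.
have K1 := sf1 KS.
have K2 : Qadj a 2 := sfD KS K1 K1.
have KX : Qadj a X.
  rewrite /X; apply: (sfD KS) => //; apply: (sfD KS); last apply: (sfN KS); last exact: (sfM KS).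
  by apply: (sfD KS); apply: (sfM KS) => //; apply: (sfM KS).
have KY : Qadj a Y.
  rewrite /Y; apply: (sfM KS) => //; apply: (sfD KS); last apply: (sfN KS) => //.
  exact: (sfM KS).
have key : X + Y * s = 0.
  by rewrite -Ha /X /Y mueq -sD; ring.
have Y0 : Y = 0.
  apply/eqP; apply: contraT => Yne; exfalso; apply: sK.
  have : Y * s = - X.
    by apply/eqP; rewrite -addr_eq0 addrC key.
  move=> /(congr1 (fun w => Y^-1 * w)); rewrite mulKf // => ->.
  apply: (sfM KS); first exact: (sfV KS KY).
  exact: (sfN KS KX).
have a2t : a = 2 * t.
  move: Y0; rewrite /Y => /eqP; rewrite mulf_eq0 (negbTE u0) orbF subr_eq0.
  by move=> /eqP.
have X0 : X = 0 by move: key; rewrite Y0 mul0r addr0.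
have uD : u * u * D = t^+2 - 1.
  apply/eqP; rewrite -subr_eq0; apply/eqP; rewrite -X0 /X a2t; ring.
pose c := tau t.
have cR : c \is Num.real := (SK t Kt).2.
have tuD : tau (u * u * D) = c^+2 - 1 by rewrite uD rmorphB rmorph1 rmorphXn.
pose t2 := t*t + u*u*D. pose u2 := t*u + t*u.
pose t3 := t*t2 + (u*u*D)*(t+t). pose u3 := t*u2 + u*t2.
have Kuu : Qadj a (u*u*D) by apply: (sfM KS) => //; apply: (sfM KS).
have Auu : u*u*D \in Aint by rewrite !rpredM.
have Kt2 : Qadj a t2 by apply: (sfD KS) => //; apply: (sfM KS).
have At2 : t2 \in Aint by rewrite rpredD ?rpredM.
have Ku2 : Qadj a u2 by apply: (sfD KS); apply: (sfM KS).
have Au2 : u2 \in Aint by rewrite rpredD ?rpredM.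
have Kt3 : Qadj a t3 by apply: (sfD KS); apply: (sfM KS) => //; apply: (sfD KS).
have At3 : t3 \in Aint by apply: rpredD; apply: rpredM => //; apply: rpredD.
have Ku3 : Qadj a u3 by apply: (sfD KS); apply: (sfM KS).
have Au3 : u3 \in Aint by rewrite rpredD ?rpredM.
have tt2 : tau t2 = 2 * c^+2 - 1 by rewrite /t2 rmorphD tuD rmorphM -/c; ring.
have tt3 : tau t3 = c * (4 * c^+2 - 3).
  rewrite /t3 rmorphD rmorphM tt2 rmorphM tuD rmorphD -/c; ring.
have R12 : (1/2 : algC) \is Num.real by rewrite mul1r realV realn.
case h1 : (1/2 < c^+2).
  exists 0%N; split => //; exists t, u; split => //; by rewrite expr1.
case h2 : (1/2 < tau t2 ^+2).
  exists 1%N; split => //; exists t2, u2; split => //.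
  by rewrite mueq /t2 /u2 -sD; ring.
case h3 : (1/2 < tau t3 ^+2).
  exists 2%N; split => //; exists t3, u3; split => //.
  by rewrite mueq /t3 /u3 /t2 /u2 -sD; ring.
exfalso.
have xR : c^+2 \is Num.real by rewrite realX.
apply: (@ineq _ (c^+2)).
- by move: h1; rewrite real_ltNge // => /negbFE.
- apply/negP => /eqP hc.
  have ht : t^+2 = 1/2.
    apply: (fmorph_inj tau); rewrite rmorphXn -/c hc rmorphM rmorph1 fmorphV rmorph_nat.
    by [].
  have hi : (1/2 : algC) \is a Num.int.
    apply: Cint_rat_Aint; last by rewrite -ht rpredX.
    by apply/CratP; exists (1/2); rewrite rmorphM rmorph1 fmorphV rmorph_nat.
  move: hi => /intrP [m hm].
  have h1m : (1 : algC) = (2 * m)%:~R.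
    by rewrite intrM -hm /= mulrC divfK // pnatr_eq0.
  apply: (no_half m); apply: (@intr_inj algC); by rewrite -h1m.
- move: h2; rewrite tt2 real_ltNge; [by move=> /negbFE | by realize | by realize].
- move: h3; rewrite tt3 exprMn real_ltNge; [by move=> /negbFE | by realize | by realize].
Qed.
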